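(* Let $G$ be a graph and $B\subseteq V(G)$. Then $B$ is a $1$-edge-leaky forcing set of $G$ if and only if for every $v\in V(G)\setminus B$ there exist forces $x\to v$ and $y\to v$ in $\mathcal{F}(B)$ with $x\neq y$.
   Context: All graphs are finite, simple and undirected. Zero forcing: vertices are blue or white; a blue vertex $u$ with exactly one white neighbor $w$ may force $w$ (color it blue), written $u\to w$. Starting from an initial blue set $B$, a forcing sequence is a chronologically ordered list of forces, each valid at the moment it is performed. $B$ is a zero forcing set if some forcing sequence colors all of $V(G)$ blue; the set of forces of such a sequence is called a forcing process of $B$. $\mathcal{F}(B)$ denotes the set of all forces $u\to v$ that occur in some forcing process of $B$ (one that colors all of $G$ blue). An edge leak is an edge $xy\in E(G)$ across which no force may be performed (neither $x\to y$ nor $y\to x$ is allowed). $B$ is an $\ell$-edge-leaky forcing set if for every set $L$ of at most $\ell$ edge leaks, exhaustively applying the forcing rule from $B$ without ever forcing across an edge of $L$ colors all of $V(G)$ blue. *)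

(* Defs.v *)
(* A finite simple graph is a symmetric irreflexive e : rel T
   on a finType T. *)
From mathcomp Require Import all_boot.
Set Implicit Arguments. Unset Strict Implicit. Unset Printing Implicit Defensive.

Section ZeroForcing.
Variable T : finType.
Variable e : rel T.

Definition valid_force (S : {set T}) (u w : T) : bool :=
  [&& u \in S, w \notin S, e u w &
      [forall x, (e u x && (x != w)) ==> (x \in S)]].

Definition leak_set (L : {set {set T}}) : Prop :=
  forall A, A \in L -> exists x y, e x y /\ A = [set x; y].

Definition allowed (L : {set {set T}}) (u w : T) : bool := [set u; w] \notin L.

Fixpoint valid_seqL (L : {set {set T}}) (S : {set T}) (s : seq (T * T)) : bool :=
  if s is (u, w) :: s' then
    [&& valid_force S u w, allowed L u w & valid_seqL L (w |: S) s']
  else true.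

Definition final_set (S : {set T}) (s : seq (T * T)) : {set T} :=
  S :|: [set p.2 | p in s].

Definition forcing_seq (B : {set T}) (s : seq (T * T)) : bool :=
  valid_seqL set0 B s.

Definition zero_forcing_set (B : {set T}) : Prop :=
  exists s, forcing_seq B s /\ final_set B s = [set: T].

Definition in_FB (B : {set T}) (u v : T) : Prop :=
  exists s, [/\ forcing_seq B s, final_set B s = [set: T] & (u, v) \in s].

Definition exhaustive (L : {set {set T}}) (B : {set T}) (s : seq (T * T)) : bool :=
  valid_seqL L B s &&
  [forall u, forall w, ~~ (valid_force (final_set B s) u w && allowed L u w)].

Definition edge_leaky_forcing (l : nat) (B : {set T}) : Prop :=
  forall L : {set {set T}}, leak_set L -> #|L| <= l ->
  forall s, exhaustive L B s -> final_set B s = [set: T].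

End ZeroForcing.

(* Main.v *)
Require Import Defs.
From mathcomp Require Import all_boot.
Set Implicit Arguments. Unset Strict Implicit.

Section Aux.
Variable T : finType.
Variable e : rel T.

Lemma mem_final (S : {set T}) s x :
  (x \in final_set S s) = (x \in S) || (x \in map snd s).
Proof.
rewrite /final_set inE; congr (_ || _).
by apply/imsetP/mapP => [[p Hp ->]|[p Hp ->]]; exists p.
Qed.

Lemma final_cons (S : {set T}) u w s :
  final_set S ((u, w) :: s) = final_set (w |: S) s.
Proof.
apply/setP => x; rewrite !mem_final /= in_cons !inE.
by case: (x == w); rewrite ?orbT.
Qed.

Lemma exh_exists (L : {set {set T}}) :
  forall n (S : {set T}), #|~: S| <= n -> exists s, exhaustive e L S s.
Proof.
elim=> [|n IH] S HS.
  exists [::]; rewrite /exhaustive /=; apply/forallP => u; apply/forallP => w.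
  apply/negP => /andP [/and4P [_ Hw _ _] _].
  move: HS; rewrite leqn0 cards_eq0 => /eqP HS.
  move: Hw; rewrite mem_final orbF => Hw.
  have : w \in ~: S by rewrite inE.
  by rewrite HS inE.
case: (boolP [exists u, exists w, valid_force e S u w && allowed L u w]).
  move=> /existsP [u /existsP [w /andP [Hv Ha]]].
  have Hw : w \notin S by case/and4P: Hv.
  have [s' Hs'] : exists s', exhaustive e L (w |: S) s'.
    apply: IH.
    have Hsub : ~: (w |: S) \proper ~: S.
      rewrite properEneq; apply/andP; split.
        apply/eqP => Heq.
        have : w \in ~: S by rewrite inE.
        by rewrite -Heq !inE eqxx.
      by apply/subsetP => x; rewrite !inE negb_or => /andP [].
    have := proper_card Hsub; move: HS; clear; move=> HS H2.
    by rewrite -ltnS; apply: leq_trans H2 HS.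
  exists ((u, w) :: s').
  move: Hs'; rewrite /exhaustive /= final_cons => /andP [H1 H2].
  by rewrite Hv Ha H1 H2.
move=> Hno; exists [::]; rewrite /exhaustive /=.
apply/forallP => u; apply/forallP => w.
have -> : final_set S [::] = S by apply/setP => x; rewrite mem_final orbF.
apply/negP => Hvw; move/negP: Hno; apply; apply/existsP; exists u.
by apply/existsP; exists w.
Qed.

Lemma targets_fresh L (S : {set T}) s :
  valid_seqL e L S s -> forall p, p \in s -> p.2 \notin S.
Proof.
elim: s S => [|[u w] s IH] S //= /and3P [Hv _ Hs] p.
rewrite in_cons => /orP [/eqP -> /=|Hp]; first by case/and4P: Hv.
by have := IH _ Hs p Hp; rewrite in_setU1 negb_or => /andP [].
Qed.

Lemma targets_uniq L (S : {set T}) s u u' w :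
  valid_seqL e L S s -> (u, w) \in s -> (u', w) \in s -> u = u'.
Proof.
elim: s S => [|[a b] s IH] S //= /and3P [_ _ Hs].
rewrite !in_cons => /orP [/eqP E1|H1] /orP [/eqP E2|H2].
- by case: E1 => -> _; case: E2 => ->.
- case: E1 => _ Ew; subst w.
  by have := targets_fresh Hs H2; rewrite /= setU11.
- case: E2 => _ Ew; subst w.
  by have := targets_fresh Hs H1; rewrite /= setU11.
- exact: IH Hs H1 H2.
Qed.

Lemma seq_edge L (S : {set T}) s u w :
  valid_seqL e L S s -> (u, w) \in s -> e u w && allowed L u w.
Proof.
elim: s S => [|[a b] s IH] S //= /and3P [Hv Ha Hs].
rewrite in_cons => /orP [/eqP [-> ->]|H]; last exact: IH Hs H.
by case/and4P: Hv => _ _ -> _; rewrite Ha.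
Qed.

Lemma seq_set0 L (S : {set T}) s :
  valid_seqL e L S s -> valid_seqL e set0 S s.
Proof.
elim: s S => [|[a b] s IH] S //= /and3P [Hv _ Hs].
by rewrite Hv (IH _ Hs) /allowed in_set0.
Qed.

Lemma vf_mono (S F : {set T}) u w :
  S \subset F -> w \notin F -> valid_force e S u w -> valid_force e F u w.
Proof.
move=> /subsetP HSF HwF /and4P [Hu _ He /forallP Hall].
rewrite /valid_force (HSF _ Hu) HwF He /=; apply/forallP => x.
by apply/implyP => Hx; apply: HSF; have := Hall x => /implyP; apply.
Qed.

Lemma first_out L0 L (S F : {set T}) s :
  valid_seqL e L0 S s -> S \subset F ->
  (forall u w, valid_force e F u w -> ~~ allowed L u w) ->
  forall v, v \in map snd s -> v \notin F ->
  exists u w, [/\ (u, w) \in s, valid_force e F u w & ~~ allowed L u w].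
Proof.
move=> Hs HSF Hex v Hv HvF.
elim: s S Hs HSF Hv => [|[a b] s IH] S //= /and3P [Hvf _ Hs] HSF.
rewrite in_cons => Hv.
case: (boolP (b \in F)) => HbF.
  have HSF' : b |: S \subset F by rewrite subUset sub1set HbF HSF.
  case/orP: Hv => [/eqP Ev|Hv]; first by move: HvF; rewrite Ev HbF.
  have [u [w [H1 H2 H3]]] := IH _ Hs HSF' Hv.
  by exists u, w; rewrite in_cons H1 orbT.
have Hvf' := vf_mono HSF HbF Hvf.
by exists a, b; rewrite in_cons eqxx Hvf' (Hex _ _ Hvf').
Qed.

End Aux.

Theorem theorem2p1 (T : finType) (e : rel T)
  (e_sym : symmetric e) (e_irr : irreflexive e) (B : {set T}) :
  edge_leaky_forcing e 1 B <->
  (forall v, v \notin B ->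
     exists x y, x != y /\ in_FB e B x v /\ in_FB e B y v).
Proof.
split.
- move=> Hleaky v Hv.
  have [s Hs] := exh_exists e set0 (leqnn _) (S := B).
  have HL0 : leak_set e (set0 : {set {set T}}) by move=> A; rewrite in_set0.
  have Hc0 : #|(set0 : {set {set T}})| <= 1 by rewrite cards0.
  have Hfull := Hleaky set0 HL0 Hc0 s Hs.
  have : v \in final_set B s by rewrite Hfull inE.
  rewrite mem_final (negbTE Hv) /= => /mapP [[x v'] Hxs /= Ev]; subst v'.
  have Hvs : valid_seqL e set0 B s by case/andP: Hs.
  have /andP [He _] := seq_edge Hvs Hxs.
  set L := [set [set x; v]].
  have [s' Hs'] := exh_exists e L (leqnn _) (S := B).
  have HL : leak_set e L.
    by move=> A; rewrite inE => /eqP ->; exists x, v.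
  have Hc1 : #|L| <= 1 by rewrite cards1.
  have Hfull' := Hleaky L HL Hc1 s' Hs'.
  have : v \in final_set B s' by rewrite Hfull' inE.
  rewrite mem_final (negbTE Hv) /= => /mapP [[y v'] Hys /= Ev]; subst v'.
  have Hvs' : valid_seqL e L B s' by case/andP: Hs'.
  have /andP [_ Ha] := seq_edge Hvs' Hys.
  exists x, y; split.
    apply/eqP => Exy; subst y.
    by move: Ha; rewrite /allowed /L inE eqxx.
  split.
    by exists s; split.
  exists s'; split => //; exact: seq_set0 Hvs'.
- move=> H L HL HcL s Hs.
  apply/eqP; apply/negPn/negP => Hne.
  set F := final_set B s.
  have [v _ HvF] : exists2 v, v \in [set: T] & v \notin F.
    apply/subsetPn; move: Hne; rewrite eqEsubset subsetT /=; done.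
  have HBF : B \subset F by rewrite /F /final_set subsetUl.
  have Hex : forall u w, valid_force e F u w -> ~~ allowed L u w.
    move=> u w Hv; case/andP: Hs => _ /forallP Hall.
    have := Hall u => /forallP /(_ w).
    by rewrite Hv.
  have HnB : forall z, z \notin F -> z \notin B.
    by move=> z Hz; apply/negP => Hz'; move/subsetP: HBF => /(_ z Hz'); rewrite (negbTE Hz).
  have Hfirst : forall s1, forcing_seq e B s1 -> final_set B s1 = [set: T] ->
      forall z, z \notin F ->
      exists u w, [/\ (u, w) \in s1, valid_force e F u w & ~~ allowed L u w].
    move=> s1 Hs1 Hf1 z Hz.
    have : z \in final_set B s1 by rewrite Hf1 inE.
    rewrite mem_final (negbTE (HnB _ Hz)) /= => Hz1.
    move: Hs1; rewrite /forcing_seq => Hs1; exact: first_out Hs1 HBF Hex _ Hz1 Hz.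
  have [x [y [_ [[s1 [Hs1 Hf1 _]] _]]]] := H v (HnB _ HvF).
  have [u [w [_ Huw Hnal]]] := Hfirst s1 Hs1 Hf1 v HvF.
  have /and4P [HuF HwF _ _] := Huw.
  have Key : forall s2 z, forcing_seq e B s2 -> final_set B s2 = [set: T] ->
      (z, w) \in s2 -> z = u.
    move=> s2 z Hs2 Hf2 Hzw.
    have [u2 [w2 [H2 Hv2 Hn2]]] := Hfirst s2 Hs2 Hf2 w HwF.
    have /and4P [Hu2F Hw2F _ _] := Hv2.
    move: Hnal Hn2; rewrite /allowed !negbK => HA1 HA2.
    have Eq : [set u2; w2] = [set u; w] by move/card_le1_eqP: HcL; apply.
    have Hu2 : u2 = u.
      have : u2 \in [set u; w] by rewrite -Eq !inE eqxx.
      rewrite !inE => /orP [/eqP //|/eqP E]; by move: Hu2F; rewrite E (negbTE HwF).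
    have Hw2 : w2 = w.
      have : w2 \in [set u; w] by rewrite -Eq !inE eqxx orbT.
      rewrite !inE => /orP [/eqP E|/eqP //]; by move: Hw2F; rewrite E HuF.
    subst u2 w2.
    by apply/esym; apply: targets_uniq Hs2 H2 Hzw.
  have [x' [y' [Hxy [[s2 [Hs2 Hf2 H2]] [s3 [Hs3 Hf3 H3]]]]]] := H w (HnB _ HwF).
  by move: Hxy; rewrite (Key _ _ Hs2 Hf2 H2) (Key _ _ Hs3 Hf3 H3) eqxx.
Qed.
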